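(* Let $\mathcal{D}',\mathcal{D}''$ be two inputs of $\mathsf{SGDsub}$ that differ only in the user $Z_{1,1}$, run from the same initial point with the same parameters, step size $\eta$, and threshold $\varsigma=1/\tau$ in $\mathsf{RobustEst}$. Suppose $6\beta\eta B\le1$ and $(\mathcal{D}',\mathcal{D}'')$ is $(1/\tau)$-aligned. Then $|s_t(\mathcal{D}',\tau)-s_t(\mathcal{D}'',\tau)|\le 2$ for all $t\ge2$.
   Context: $\mathcal{X}\subset\mathbb{R}^d$ is an $\ell_\infty$-ball with Euclidean projection $\Pi_{\mathcal{X}}$. Each $f(\cdot;z)$ is convex, $\beta$-smooth ($\|\nabla^2 f(x;z)\|_\infty\le\beta$, $\|A\|_\infty=\max_i\sum_j|A_{ij}|$) with diagonally dominant Hessian ($|A_{ii}|\ge\sum_{j\ne i}|A_{ij}|$). Robust statistic: a coordinatewise map $(X_1,\dots,X_B)\mapsto X_{\mathrm{rs}}$ with (i) if more than $B/2$ of the $X_i$ lie in $B_\infty(X',\rho)$ then $X_{\mathrm{rs}}\in B_\infty(X',\rho)$; (ii) if $\|Y_i-X_i\|_\infty\le\Delta$ for all $i$ then $\|X_{\mathrm{rs}}-Y_{\mathrm{rs}}\|_\infty\le\Delta$; (iii) $(aX_i+b)_{\mathrm{rs}}=aX_{\mathrm{rs}}+b$. $\mathsf{RobustEst}(X_1,\dots,X_B;\varsigma)$: coordinatewise, output the projection of the mean $\bar x[j]$ onto $[X_{\mathrm{rs}}[j]-\varsigma,X_{\mathrm{rs}}[j]+\varsigma]$ if $|X_{\mathrm{rs}}[j]-\bar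 x[j]|\ge\varsigma$, else $\bar x[j]$. $\mathsf{SGDsub}$: users (sets of $m$ points) split into groups $\{Z_{i,t}\}_{t\in[T]}$, $i\in[B]$; $q_t(Z_{i,t})=\frac1m\sum_{z\in Z_{i,t}}\nabla f(x_{t-1};z)$, $g_{t-1}=\mathsf{RobustEst}(q_t(Z_{1,t}),\dots,q_t(Z_{B,t});\varsigma)$, $x_t=\Pi_{\mathcal{X}}(x_{t-1}-\eta g_{t-1})$. $s_t(\mathcal{D}',\tau)=\frac1B\sum_{i,j\in[B]}\exp(-\tau\|q_t(Z_{i,t})-q_t(Z_{j,t})\|_\infty)$, and $s_t(\mathcal{D}'',\tau)$ is the same with $q'_t$ computed along the trajectory $y_t$ of $\mathcal{D}''$. The pair is $\rho$-aligned if there are $X',Y'$ such that at least $2B/3$ of $q_1(Z_{i,1})$ lie in $B_\infty(X',\rho)$ and at least $2B/3$ of $q'_1(Z'_{i,1})$ lie in $B_\infty(Y',\rho)$. *)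

(* Defs.v *)
From HB Require Import structures.
From mathcomp Require Import all_boot all_order all_algebra.
From mathcomp Require Import all_classical all_reals all_analysis.
Set Implicit Arguments. Unset Strict Implicit. Unset Printing Implicit Defensive.
Import Order.TTheory GRing.Theory Num.Theory.
Import numFieldNormedType.Exports.
Local Open Scope ring_scope.

Section Defs.
Variables (R : realType) (d : nat).

Definition linf (v : 'rV[R]_d) : R := \big[Num.max/0]_(j < d) `|v 0 j|.

Definition mxinf (A : 'M[R]_d) : R :=
  \big[Num.max/0]_(i < d) \sum_(j < d) `|A i j|.

Definition diag_dominant (A : 'M[R]_d) : Prop :=
  forall i : 'I_d, \sum_(j < d | j != i) `|A i j| <= `|A i i|.

Definition in_linf_ball (c : 'rV[R]_d) (rho : R) (x : 'rV[R]_d) : Prop :=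
  linf (x - c) <= rho.

Definition sqdist2 (x y : 'rV[R]_d) : R := \sum_(j < d) (x 0 j - y 0 j) ^+ 2.

Definition is_euclid_proj_ball (c : 'rV[R]_d) (r : R) (Pi : 'rV[R]_d -> 'rV[R]_d)
  : Prop :=
  forall y, in_linf_ball c r (Pi y) /\
    forall x, in_linf_ball c r x -> sqdist2 y (Pi y) <= sqdist2 y x.

Definition convex_fun (f : 'rV[R]_d -> R) : Prop :=
  forall (x y : 'rV[R]_d) (l : R), 0 <= l <= 1 ->
    f (l *: x + (1 - l) *: y) <= l * f x + (1 - l) * f y.

Definition is_gradient (f : 'rV[R]_d -> R^o) (g : 'rV[R]_d -> 'rV[R]_d) : Prop :=
  forall x, differentiable f x /\
    forall v : 'rV[R]_d, ('d f x : 'rV[R]_d -> R^o) v = \sum_(j < d) g x 0 j * v 0 j.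

Definition is_hessian (g : 'rV[R]_d -> 'rV[R]_d) (H : 'rV[R]_d -> 'M[R]_d) : Prop :=
  forall x, differentiable g x /\
    forall v : 'rV[R]_d, ('d g x : 'rV[R]_d -> 'rV[R]_d) v = (H x *m v^T)^T.

Variable B : nat.

Definition coord_map (phi : ('I_B -> R) -> R) (X : 'I_B -> 'rV[R]_d) : 'rV[R]_d :=
  \row_j phi (fun i => X i 0 j).

Definition robust_stat (rs : ('I_B -> 'rV[R]_d) -> 'rV[R]_d) : Prop :=
  [/\ (forall (X : 'I_B -> 'rV[R]_d) (X' : 'rV[R]_d) (rho : R),
         (B < 2 * #|[set i : 'I_B | `[< in_linf_ball X' rho (X i) >]]|)%N ->
         in_linf_ball X' rho (rs X)),
      (forall (X Y : 'I_B -> 'rV[R]_d) (Delta : R),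
         (forall i, linf (Y i - X i) <= Delta) -> linf (rs X - rs Y) <= Delta) &
      (forall (X : 'I_B -> 'rV[R]_d) (a : R) (b : 'rV[R]_d),
         rs (fun i => a *: X i + b) = a *: rs X + b)].

Definition mean (X : 'I_B -> 'rV[R]_d) : 'rV[R]_d := B%:R^-1 *: \sum_(i < B) X i.

Definition clamp (lo hi a : R) : R := Num.max lo (Num.min hi a).

Definition robust_est (rs : ('I_B -> 'rV[R]_d) -> 'rV[R]_d)
  (X : 'I_B -> 'rV[R]_d) (vs : R) : 'rV[R]_d :=
  \row_j (let xr := rs X 0 j in let xb := mean X 0 j in
          if vs <= `|xr - xb| then clamp (xr - vs) (xr + vs) xb else xb).

Variables (Zt : Type) (m : nat).

Definition qgrad (gradf : Zt -> 'rV[R]_d -> 'rV[R]_d) (U : 'I_m -> Zt)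
  (x : 'rV[R]_d) : 'rV[R]_d := m%:R^-1 *: \sum_(k < m) gradf (U k) x.

(* D t i = the user Z_{i,t} (only t >= 1 is used) *)
Fixpoint sgd_traj (gradf : Zt -> 'rV[R]_d -> 'rV[R]_d)
  (rs : ('I_B -> 'rV[R]_d) -> 'rV[R]_d) (Pi : 'rV[R]_d -> 'rV[R]_d)
  (eta vs : R) (x0 : 'rV[R]_d) (D : nat -> 'I_B -> 'I_m -> Zt) (t : nat)
  : 'rV[R]_d :=
  match t with
  | 0 => x0
  | t'.+1 =>
      let x := sgd_traj gradf rs Pi eta vs x0 D t' in
      Pi (x - eta *: robust_est rs (fun i => qgrad gradf (D t'.+1 i) x) vs)
  end.

Definition s_stat (gradf : Zt -> 'rV[R]_d -> 'rV[R]_d)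
  (rs : ('I_B -> 'rV[R]_d) -> 'rV[R]_d) (Pi : 'rV[R]_d -> 'rV[R]_d)
  (eta vs : R) (x0 : 'rV[R]_d) (D : nat -> 'I_B -> 'I_m -> Zt) (tau : R) (t : nat)
  : R :=
  let x := sgd_traj gradf rs Pi eta vs x0 D t.-1 in
  B%:R^-1 * \sum_(i < B) \sum_(j < B)
     expR (- (tau * linf (qgrad gradf (D t i) x - qgrad gradf (D t j) x))).

(* rho-alignment of (D1, D2): both start at x0, so q_1 is evaluated at x0 *)
Definition aligned (gradf : Zt -> 'rV[R]_d -> 'rV[R]_d) (x0 : 'rV[R]_d)
  (D1 D2 : nat -> 'I_B -> 'I_m -> Zt) (rho : R) : Prop :=
  exists X' Y' : 'rV[R]_d,
    (2 * B <= 3 * #|[set i : 'I_B | `[< in_linf_ball X' rho (qgrad gradf (D1 1%N i) x0) >]]|)%N /\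
    (2 * B <= 3 * #|[set i : 'I_B | `[< in_linf_ball Y' rho (qgrad gradf (D2 1%N i) x0) >]]|)%N.

End Defs.

(* Main.v *)
From HB Require Import structures.
From mathcomp Require Import all_boot all_order all_algebra.
From mathcomp Require Import all_classical all_reals all_analysis.
Require Import Defs.
From mathcomp Require Import lra ring zify.
Import Order.TTheory GRing.Theory Num.Theory.
Import numFieldNormedType.Exports.
Local Open Scope ring_scope.
Local Open Scope classical_set_scope.
Set Implicit Arguments. Unset Strict Implicit.

Lemma mulmx_tr_coord (R : realType) d (H : 'M[R]_d) (v : 'rV[R]_d) j :
  ((H *m v^T)^T) 0 j = \sum_l H j l * v 0 l.
Proof. by rewrite !mxE; apply: eq_bigr => l _; rewrite !mxE. Qed.

Lemma sum_delta (R : realType) d (a : 'rV[R]_d) j h :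
  \sum_l a 0 l * (h *: (delta_mx 0 j : 'rV[R]_d)) 0 l = h * a 0 j.
Proof.
rewrite (bigD1 j) //= big1 => [|l lj]; rewrite !mxE ?eqxx /=.
  by rewrite mulr1 addr0 mulrC.
by rewrite (negbTE lj) mulr0 mulr0.
Qed.

Lemma coord_cvg (R : realType) (T : Type) (F : set_system T) {FF : Filter F}
  d (Q : T -> 'rV[R]_d) (L : 'rV[R]_d) j :
  Q @ F --> L -> (fun h => Q h 0 j) @ F --> L 0 j.
Proof.
move=> HQ.
exact: (cvg_comp _ _ HQ (@coord_continuous _ _ _ 0 j L)).
Qed.
Arguments coord_cvg {R T F FF d Q L} j.
Lemma quot_cvg (R : realType) (V W : normedModType R) (G : V -> W) p v :
  differentiable G p ->
  (fun h : R => h^-1 *: (G (h *: v + p) - G p)) @ 0^' --> 'd G p v.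
Proof.
move=> dG.
have := @diff_derivable _ _ _ G p v dG; rewrite /derivable.
by rewrite -(@deriveE _ _ _ G p v dG) /derive.
Qed.

Lemma grad_ineq (R : realType) d (F : 'rV[R]_d -> R^o) p v :
  convex_fun F -> differentiable F p ->
  ('d F p : 'rV[R]_d -> R^o) v <= F (p + v) - F p.
Proof.
move=> cF dF.
have H := cvg_dnbhs_at_right (@quot_cvg _ _ _ F p v dF).
apply: (cvgr_to_le H).
near=> h.
have h0 : 0 < h by near: h; exact: nbhs_right_gt.
have h1 : h < 1 by near: h; exact: nbhs_right_lt.
have := cF (p + v) p h.
rewrite (ltW h0) (ltW h1) => /(_ isT).
have -> : h *: (p + v) + (1 - h) *: p = h *: v + p.
  by rewrite scalerDr scalerBl scale1r; rewrite addrC addrA addrNK addrC.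
move=> Hc.
change (h^-1 * (F (h *: v + p) - F p) <= F (p + v) - F p).
rewrite ler_pdivrMl //.
lra.
Unshelve. all: by end_near.
Qed.

Lemma hess_diag_ge0 (R : realType) d (F : 'rV[R]_d -> R^o) G Hs p j :
  convex_fun F -> is_gradient F G -> is_hessian G Hs -> 0 <= Hs p j j.
Proof.
move=> cF gF hG.
set e : 'rV[R]_d := delta_mx 0 j.
have [dG dGv] := hG p.
have Hq := coord_cvg j (@quot_cvg _ _ _ G p e dG).
rewrite dGv mulmx_tr_coord in Hq.
have -> : Hs p j j = \sum_l Hs p j l * e 0 l.
  by rewrite (bigD1 j) //= big1 => [|l lj]; rewrite !mxE ?eqxx /= ?mulr1 ?addr0 // (negbTE lj) mulr0.
apply: (@cvgr_to_ge _ _ (Proper_dnbhs_numFieldType 0) _ _ _ _ (Hq (dnbhs_filter _))).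
near=> h.
have h0 : h != 0 by near: h; exact: nbhs_dnbhs_neq.
set p' := h *: e + p.
have [dFp gFp] := gF p.
have [dFp' gFp'] := gF p'.
have I1 := @grad_ineq _ _ F p (h *: e) cF dFp.
have I2 := @grad_ineq _ _ F p' (- (h *: e)) cF dFp'.
rewrite gFp sum_delta in I1.
rewrite gFp' -scaleNr sum_delta in I2.
have E2 : p' + - h *: e = p by rewrite /p' scaleNr addrC addKr.
have E1 : p + h *: e = p' by rewrite /p' addrC.
rewrite E2 in I2; rewrite E1 in I1.
rewrite !mxE.
set X := G p' 0 j - G p 0 j.
have hX : 0 <= h * X by rewrite /X; lra.
have -> : h^-1 * X = h^-1 * h^-1 * (h * X) by rewrite -mulrA (mulrA _ h) mulVf // mul1r.
by apply: mulr_ge0 => //; rewrite -expr2 sqr_ge0.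
Unshelve. all: by end_near.
Qed.

Lemma mvt_coord (R : realType) d (G : 'rV[R]_d -> 'rV[R]_d) Hs x y j :
  is_hessian G Hs -> exists p, (G x - G y) 0 j = \sum_l Hs p j l * (x - y) 0 l.
Proof.
move=> hG.
set v := x - y.
pose phi : R -> R := fun s : R => G (s *: v + y) 0 j.
pose dphi := fun s : R => \sum_l Hs (s *: v + y) j l * v 0 l.
have Dphi : forall s : R, is_derive s (1 : R) phi (dphi s).
  move=> s.
  have [dG dGv] := hG (s *: v + y).
  have Hq := coord_cvg j (@quot_cvg _ _ _ G (s *: v + y) v dG).
  rewrite dGv mulmx_tr_coord in Hq.
  have Hq' := Hq (dnbhs_filter _).
  have E : (fun h : R => h^-1 *: ((phi \o shift s) (h *: 1) - phi s)) =
           (fun h => (h^-1 *: (G (h *: v + (s *: v + y)) - G (s *: v + y))) 0 j).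
    apply: funext => h /=.
    rewrite /phi !mxE.
    congr (_ * (G _ 0 j - _)).
    by rewrite [_%:A]mulr1 scalerDl addrA.
  have Hc : (fun h : R => h^-1 *: ((phi \o shift s) (h *: 1) - phi s)) @ 0^' --> dphi s.
    by rewrite E.
  apply: DeriveDef.
    by apply/cvg_ex; exists (dphi s).
  by rewrite /derive (cvg_lim _ Hc).
have [c _ Hc] := @MVT_segment R phi dphi 0 1 ler01 (fun s _ => Dphi s)
  (derivable_within_continuous (fun s _ => @ex_derive _ _ _ _ _ _ _ (Dphi s))).
exists (c *: v + y).
move: Hc; rewrite /phi /dphi scale1r scale0r add0r subr0 mulr1 /v subrK.
by rewrite !mxE.
Qed.

Lemma le_maxr (R : realDomainType) (a b c : R) : (c <= Num.max a b) = (c <= a) || (c <= b).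
Proof. by rewrite le_max. Qed.
Lemma ge_maxr (R : realDomainType) (a b c : R) : (Num.max a b <= c) = (a <= c) && (b <= c).
Proof. by rewrite ge_max. Qed.

Lemma max_gel (R : realDomainType) (a b : R) : a <= Num.max a b.
Proof. by rewrite le_max lexx. Qed.

Section Linf.
Variables (R : realType) (d : nat).

Lemma linf_ge0 (v : 'rV[R]_d) : 0 <= linf v.
Proof. by rewrite /linf; elim/big_ind: _ => // a b Ha Hb; rewrite le_maxr Ha. Qed.

Lemma bigmax_ge n (F : 'I_n -> R) j : F j <= \big[Num.max/0]_(i < n) F i.
Proof. rewrite (bigD1 j) //=. have := @max_gel R (F j) (\big[Num.max/0]_(i < n | i != j) F i). by []. Qed.

Lemma linf_coord (v : 'rV[R]_d) j : `|v 0 j| <= linf v.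
Proof. exact: bigmax_ge. Qed.

Lemma linf_le (v : 'rV[R]_d) r : 0 <= r -> (forall j, `|v 0 j| <= r) -> linf v <= r.
Proof. by move=> r0 H; rewrite /linf; elim/big_ind: _ => // a b Ha Hb; rewrite ge_maxr Ha Hb. Qed.

Lemma mxinf_row (H : 'M[R]_d) j : \sum_l `|H j l| <= mxinf H.
Proof. exact: bigmax_ge. Qed.

End Linf.

Lemma row_bound (R : realType) d (H : 'M[R]_d) (w : 'rV[R]_d) j :
  `|\sum_l H j l * w 0 l| <= mxinf H * linf w.
Proof.
apply: le_trans; first exact: ler_norm_sum.
apply: le_trans (_ : \sum_l `|H j l| * linf w <= _).
  apply: ler_sum => l _; rewrite normrM; apply: ler_wpM2l => //; exact: linf_coord.
rewrite -mulr_suml; apply: ler_wpM2r; [exact: linf_ge0 | exact: mxinf_row].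
Qed.

Lemma step_bound (R : realType) d (H : 'M[R]_d) (w : 'rV[R]_d) j eta :
  0 <= H j j -> diag_dominant H -> 0 <= eta -> eta * mxinf H <= 1 ->
  `|w 0 j - eta * \sum_l H j l * w 0 l| <= linf w.
Proof.
move=> a0 dd e0 eb.
rewrite (bigD1 j) //=.
set S := \sum_(l | l != j) _.
set T := \sum_(l | l != j) `|H j l|.
have ST : `|S| <= T * linf w.
  apply: le_trans; first exact: ler_norm_sum.
  rewrite mulr_suml; apply: ler_sum => l _; rewrite normrM.
  apply: ler_wpM2l => //; exact: linf_coord.
have Ta : T <= H j j by have := dd j; rewrite ger0_norm.
have aM : H j j <= mxinf H.
  apply: le_trans (mxinf_row H j).
  by rewrite (bigD1 j) //= ger0_norm // lerDl sumr_ge0.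
have ea : eta * H j j <= 1 by apply: le_trans eb; apply: ler_wpM2l.
have wj := linf_coord w j.
have d0 := linf_ge0 w.
have -> : w 0 j - eta * (H j j * w 0 j + S) = (1 - eta * H j j) * w 0 j - eta * S by ring.
apply: le_trans (ler_normB _ _) _.
rewrite !normrM (ger0_norm e0) ger0_norm ?subr_ge0 //.
have h1 : (1 - eta * H j j) * `|w 0 j| <= (1 - eta * H j j) * linf w.
  by apply: ler_wpM2l => //; rewrite subr_ge0.
have h2 : eta * `|S| <= eta * (T * linf w) by apply: ler_wpM2l.
have h3 : eta * (T * linf w) <= eta * (H j j * linf w).
  by apply: ler_wpM2l => //; apply: ler_wpM2r.
lra.
Qed.
Section Scalar.
Variable R : realType.
Implicit Types (lo hi x y a b s X Y D : R).

Lemma clampE lo hi x : lo <= hi ->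
  clamp lo hi x = if x < lo then lo else if hi < x then hi else x.
Proof.
move=> lh; rewrite /clamp /Order.max /Order.min.
by case: (ltP hi x) => h1; case: (ltP x lo) => h2; case: ltP => h3; lra.
Qed.

Lemma clamp_itv lo hi x : lo <= hi -> lo <= clamp lo hi x <= hi.
Proof. move=> lh; rewrite clampE //; case: ltP => ?; [lra|case: ltP => ?; lra]. Qed.

Lemma clamp_lip lo hi x y : lo <= hi -> `|clamp lo hi x - clamp lo hi y| <= `|x - y|.
Proof.
move=> lh; rewrite !clampE //.
rewrite ler_norml; case: (lerP 0 (x - y)) => hxy;
  [rewrite (ger0_norm hxy) | rewrite (ltr0_norm hxy)];
  do 2 (case: ltP => ?; [|case: ltP => ?]); apply/andP; split; lra.
Qed.

Lemma clamp_scale e lo hi x : 0 <= e -> lo <= hi ->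
  e * clamp lo hi x = clamp (e * lo) (e * hi) (e * x).
Proof.
move=> e0 lh.
case: (eqVneq e 0) => [->|en0]; first by rewrite !mul0r /clamp minxx maxxx.
have ep : 0 < e by rewrite lt0r en0.
rewrite !clampE //; last by rewrite ler_pM2l.
rewrite !ltr_pM2l //.
by case: ltP => _ //; case: ltP.
Qed.

Lemma re_clamp s a b : 0 <= s ->
  (if s <= `|a - b| then clamp (a - s) (a + s) b else b) = clamp (a - s) (a + s) b.
Proof.
move=> s0; case: ifP => // h.
rewrite clampE; last lra.
move/negbT: h; rewrite -ltNge => h.
have : - s < a - b < s by rewrite -ltr_norml.
move=> /andP [h1 h2].
by case: ltP => ?; [lra | case: ltP => ?; lra].
Qed.

Lemma clamp_dist s X a b Y a' b' D : 0 <= s ->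
  `|(X - a) - (Y - a')| <= D -> `|(X - b) - (Y - b')| <= D ->
  `|(X - clamp (a - s) (a + s) b) - (Y - clamp (a' - s) (a' + s) b')| <= D.
Proof.
move=> s0; rewrite !clampE; try lra.
rewrite !ler_norml => /andP [h1 h2] /andP [h3 h4].
by do 2 (case: ltP => ?; [|case: ltP => ?]); apply/andP; split; lra.
Qed.

Lemma exp_lip (u v : R) : 0 <= u -> 0 <= v -> `|expR (- u) - expR (- v)| <= `|u - v|.
Proof.
wlog uv : u v / u <= v.
  move=> W u0 v0; case: (boolP (u <= v)) => h; first exact: (W u v h u0 v0).
  rewrite -ltNge in h.
  rewrite distrC (distrC u); exact: (W v u (ltW h) v0 u0).
move=> u0 v0.
have e1 : expR (- v) = expR (- u) * expR (- (v - u)) by rewrite -expRD; congr expR; ring.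
have h1 := expR_ge1Dx (- (v - u)).
have h2 : expR (- u) <= 1 by rewrite expR_le1; lra.
have h3 := expR_ge0 (- u).
have h4 := expR_ge0 (- (v - u)).
have h5 : expR (- (v - u)) <= 1 by rewrite expR_le1; lra.
rewrite e1 (ger0_norm (_ : 0 <= expR (- u) - expR (- u) * expR (- (v - u)))); last first.
  by rewrite subr_ge0 ler_piMr.
rewrite ler0_norm; last lra.
have : expR (- u) * (1 - expR (- (v - u))) <= 1 * (1 - expR (- (v - u))).
  by apply: ler_wpM2r => //; lra.
lra.
Qed.

End Scalar.

Lemma clamp_strict (R : realType) (lo hi y p : R) : lo <= hi -> lo <= p <= hi ->
  p != clamp lo hi y -> (y - clamp lo hi y) ^+ 2 < (y - p) ^+ 2.
Proof.
move=> lh /andP [h1 h2]; rewrite clampE //.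
case: (ltP y lo) => a1.
  move=> ne; have : lo < p by rewrite lt_neqAle h1 andbT eq_sym.
  move=> hp; nra.
case: (ltP hi y) => a2.
  move=> ne; have : p < hi by rewrite lt_neqAle h2 andbT.
  move=> hp; nra.
rewrite subrr expr0n /=.
by case: (ltgtP p y) => // h _; nra.
Qed.

Lemma proj_coord (R : realType) d (c : 'rV[R]_d) r Pi y j : 0 <= r ->
  is_euclid_proj_ball c r Pi -> (Pi y) 0 j = clamp (c 0 j - r) (c 0 j + r) (y 0 j).
Proof.
move=> r0 HP; have [inb minP] := HP y.
set P := Pi y; set q := clamp _ _ _.
have lh : c 0 j - r <= c 0 j + r by lra.
have hq := clamp_itv (y 0 j) lh; rewrite -/q in hq.
have hP : `|P 0 j - c 0 j| <= r.
  by have := le_trans (linf_coord (P - c) j) inb; rewrite !mxE.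
case: (eqVneq (P 0 j) q) => // ne; exfalso.
pose x := P + (q - P 0 j) *: (delta_mx 0 j : 'rV[R]_d).
have xj : x 0 j = q by rewrite !mxE !eqxx /= mulr1; ring.
have xl : forall l, l != j -> x 0 l = P 0 l.
  by move=> l lj; rewrite !mxE (negbTE lj) mulr0 addr0.
have xin : in_linf_ball c r x.
  apply: linf_le => // l; rewrite !mxE.
  case: (eqVneq l j) => [->|lj].
    rewrite andbT eqxx /=.
    rewrite mulr1 (_ : P 0 j + (q - P 0 j) = q); last ring.
    rewrite ler_norml; apply/andP; split; lra.
  rewrite andbF mulr0 addr0.
  by have := le_trans (linf_coord (P - c) l) inb; rewrite !mxE.
have := minP x xin; rewrite /sqdist2.
rewrite (bigD1 j) //= [X in _ <= X](bigD1 j) //= xj.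
have -> : \sum_(l < d | l != j) (y 0 l - x 0 l) ^+ 2 = \sum_(l < d | l != j) (y 0 l - P 0 l) ^+ 2.
  by apply: eq_bigr => l lj; rewrite xl.
have hPj : c 0 j - r <= P 0 j <= c 0 j + r.
  by move: hP; rewrite ler_norml => /andP [? ?]; apply/andP; split; lra.
have := clamp_strict lh hPj ne.
rewrite -/q; lra.
Qed.

Lemma grad_lip (R : realType) d (G : 'rV[R]_d -> 'rV[R]_d) Hs beta x y j :
  is_hessian G Hs -> (forall p, mxinf (Hs p) <= beta) ->
  `|(G x - G y) 0 j| <= beta * linf (x - y).
Proof.
move=> hG hb; have [p ->] := mvt_coord x y j hG.
apply: le_trans (row_bound _ _ _) _.
by apply: ler_wpM2r; [exact: linf_ge0 | exact: hb].
Qed.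

Lemma grad_step (R : realType) d (F : 'rV[R]_d -> R^o) G Hs beta eta (x y : 'rV[R]_d) j :
  convex_fun F -> is_gradient F G -> is_hessian G Hs ->
  (forall p, mxinf (Hs p) <= beta) -> (forall p, diag_dominant (Hs p)) ->
  0 <= eta -> eta * beta <= 1 ->
  `|(x - y) 0 j - eta * (G x - G y) 0 j| <= linf (x - y).
Proof.
move=> cF gF hG hb dd e0 eb; have [p ->] := mvt_coord x y j hG.
apply: step_bound => //.
- exact: hess_diag_ge0 cF gF hG.
- by apply: le_trans eb; apply: ler_wpM2l.
Qed.

Lemma avg_bound (R : realType) m (a : 'I_m -> R) c del : (0 < m)%N ->
  (forall k, `|c - a k| <= del) -> `|c - m%:R^-1 * \sum_k a k| <= del.
Proof.
move=> m0 H.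
have mR : (0 : R) < m%:R by rewrite ltr0n.
have -> : c - m%:R^-1 * \sum_k a k = m%:R^-1 * \sum_k (c - a k).
  rewrite sumrB sumr_const card_ord mulrBr; congr (_ - _).
  by rewrite -(mulr_natl c m) mulrA mulVf ?mul1r // gt_eqF.
rewrite normrM ger0_norm; last by rewrite invr_ge0 ltW.
rewrite ler_pdivrMl //.
apply: le_trans; first exact: ler_norm_sum.
apply: le_trans (_ : \sum_(k < m) del <= _).
  by apply: ler_sum => k _.
by rewrite sumr_const card_ord mulr_natl.
Qed.

Section Q.
Variables (R : realType) (d m : nat) (Zt : Type) (gradf : Zt -> 'rV[R]_d -> 'rV[R]_d).

Lemma qcoord (U : 'I_m -> Zt) (x y : 'rV[R]_d) (j : 'I_d) : (qgrad gradf U x - qgrad gradf U y) 0 j =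
  m%:R^-1 * \sum_k (gradf (U k) x - gradf (U k) y) 0 j.
Proof.
rewrite /qgrad !mxE !summxE -mulrBr -sumrB; congr (_ * _).
by apply: eq_bigr => k _; rewrite !mxE.
Qed.

Lemma q_lip bp (U : 'I_m -> Zt) (x y : 'rV[R]_d) (j : 'I_d) : 0 <= bp ->
  (forall z x y j, `|(gradf z x - gradf z y) 0 j| <= bp * linf (x - y)) ->
  `|(qgrad gradf U x - qgrad gradf U y) 0 j| <= bp * linf (x - y).
Proof.
move=> bp0 H; rewrite qcoord.
have hd := linf_ge0 (x - y).
case: (posnP m) => [m0|m0].
  have -> : (m%:R : R)^-1 = 0 by rewrite m0 invr0.
  by rewrite mul0r normr0 mulr_ge0.
have mR : (0 : R) < m%:R by rewrite ltr0n.
rewrite normrM ger0_norm; last by rewrite invr_ge0 ltW.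
rewrite ler_pdivrMl //.
apply: le_trans; first exact: ler_norm_sum.
apply: le_trans (_ : \sum_(k < m) bp * linf (x - y) <= _).
  by apply: ler_sum => k _.
by rewrite sumr_const card_ord mulr_natl.
Qed.

Lemma q_step (eta : R) (U : 'I_m -> Zt) (x y : 'rV[R]_d) (j : 'I_d) :
  (forall z (x y : 'rV[R]_d) j, `|(x - y) 0 j - eta * (gradf z x - gradf z y) 0 j| <= linf (x - y)) ->
  `|(x - y) 0 j - eta * (qgrad gradf U x - qgrad gradf U y) 0 j| <= linf (x - y).
Proof.
move=> H; rewrite qcoord.
case: (posnP m) => [m0|m0].
  have -> : (m%:R : R)^-1 = 0 by rewrite m0 invr0.
  by rewrite mul0r mulr0 subr0 linf_coord.
rewrite mulrA (mulrC eta) -mulrA mulr_sumr.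
exact: avg_bound.
Qed.

End Q.

Lemma normeq (R : realType) (a b c : R) : a = b -> `|b| <= c -> `|a| <= c.
Proof. by move=> ->. Qed.

Lemma normeqN (R : realType) (a b c : R) : a = - b -> `|b| <= c -> `|a| <= c.
Proof. by move=> ->; rewrite normrN. Qed.

Section Robust.
Variables (R : realType) (d B : nat).
Implicit Types (X Y : 'I_B -> 'rV[R]_d).

Lemma mean_coord X (j : 'I_d) : mean X 0 j = B%:R^-1 * \sum_i X i 0 j.
Proof. by rewrite /mean !mxE summxE. Qed.

Lemma re_sub_coord rs X vs (eta : R) (z : 'rV[R]_d) (j : 'I_d) : 0 <= vs ->
  (z - eta *: robust_est rs X vs) 0 j
  = z 0 j - eta * clamp (rs X 0 j - vs) (rs X 0 j + vs) (mean X 0 j).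
Proof.
by move=> v0; rewrite /robust_est !mxE /= re_clamp.
Qed.

Lemma step_nonexp rs (c : 'rV[R]_d) r Pi (eta vs : R) (Qx Qy : 'I_B -> 'rV[R]_d) (x y : 'rV[R]_d) :
  (0 < B)%N -> 0 <= r -> is_euclid_proj_ball c r Pi ->
  (forall X Y Delta, (forall i, linf (Y i - X i) <= Delta) -> linf (rs X - rs Y) <= Delta) ->
  (forall X a b, rs (fun i => a *: X i + b) = a *: rs X + b) ->
  0 <= eta -> 0 <= vs ->
  (forall i j, `|(x - y) 0 j - eta * (Qx i - Qy i) 0 j| <= linf (x - y)) ->
  linf (Pi (x - eta *: robust_est rs Qx vs) - Pi (y - eta *: robust_est rs Qy vs))
    <= linf (x - y).
Proof.
move=> B0 r0 hP rs2 rs3 e0 v0 H.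
apply: linf_le; first exact: linf_ge0.
move=> j; rewrite !mxE (proj_coord _ _ r0 hP) (proj_coord _ _ r0 hP).
apply: le_trans; first by apply: clamp_lip; lra.
rewrite !re_sub_coord //.
have lh : forall a : R, a - vs <= a + vs by move=> a; lra.
rewrite !clamp_scale // !mulrBr !mulrDr.
apply: clamp_dist; first exact: mulr_ge0.
- have Hr : linf (rs (fun i => (-eta) *: Qy i + y) - rs (fun i => (-eta) *: Qx i + x)) <= linf (x - y).
    apply: rs2 => i; apply: linf_le; first exact: linf_ge0.
    move=> l; apply: normeq (H i l); rewrite !mxE; ring.
  move: Hr; rewrite !rs3 => /(le_trans (linf_coord _ j)) Hc.
  apply: normeqN Hc; rewrite !mxE; ring.
- rewrite !mean_coord.
  have := @avg_bound R B (fun i => eta * (Qx i - Qy i) 0 j) ((x - y) 0 j) (linf (x - y)) B0 (fun i => H i j).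
  apply: normeq.
  have -> : \sum_i eta * (Qx i - Qy i) 0 j = eta * (\sum_i Qx i 0 j - \sum_i Qy i 0 j).
    by rewrite -sumrB mulr_sumr; apply: eq_bigr => i _; rewrite !mxE.
  rewrite !mxE; ring.
Qed.

End Robust.

Lemma linf_diff (R : realType) d (u w : 'rV[R]_d) : `|linf u - linf w| <= linf (u - w).
Proof.
have h0 := linf_ge0 (u - w).
have A : forall a b : 'rV[R]_d, linf a <= linf b + linf (a - b).
  move=> a b; apply: linf_le; first by apply: addr_ge0; exact: linf_ge0.
  move=> j; apply: le_trans (_ : `|b 0 j| + `|(a - b) 0 j| <= _); last first.
    by apply: lerD; exact: linf_coord.
  rewrite (_ : a 0 j = b 0 j + (a - b) 0 j); first exact: ler_normD.
  by rewrite !mxE; ring.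
have h1 := A u w.
have h2 := A w u.
have E : linf (w - u) = linf (u - w).
  by rewrite -opprB /linf; apply: eq_bigr => j _; rewrite mxE normrN.
rewrite E in h2.
rewrite ler_norml; apply/andP; split; lra.
Qed.

Lemma ball_coord (R : realType) d (c v : 'rV[R]_d) rho j :
  in_linf_ball c rho v -> c 0 j - rho <= v 0 j <= c 0 j + rho.
Proof.
move=> H; have := le_trans (linf_coord (v - c) j) H.
by rewrite !mxE ler_norml => /andP [h1 h2]; apply/andP; split; lra.
Qed.

Lemma sum_range (R : realType) B (E : 'I_B -> 'I_B -> R) :
  (forall i j, 0 <= E i j <= 1) -> (forall i, E i i = 1) ->
  B%:R <= \sum_i \sum_j E i j <= B%:R * B%:R.
Proof.
move=> H1 H2; apply/andP; split.
  have -> : (B%:R : R) = \sum_(i < B) 1 by rewrite sumr_const card_ord.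
  apply: ler_sum => i _; rewrite (bigD1 i) //= H2 lerDl.
  by apply: sumr_ge0 => j _; case/andP: (H1 i j).
have -> : (B%:R * B%:R : R) = \sum_(i < B) \sum_(j < B) 1.
  by rewrite !sumr_const card_ord mulr_natr.
apply: ler_sum => i _; apply: ler_sum => j _.
by case/andP: (H1 i j).
Qed.

Lemma small_case (R : realType) B (S1 S2 : R) : (B <= 3)%N ->
  B%:R <= S1 <= B%:R * B%:R -> B%:R <= S2 <= B%:R * B%:R ->
  `|B%:R^-1 * S1 - B%:R^-1 * S2| <= 2.
Proof.
move=> B3 /andP [a1 a2] /andP [b1 b2].
case: (posnP B) => [B0|Bp].
  move: a1 a2 b1 b2; rewrite B0 mul0r invr0 !mul0r subrr normr0 => *; lra.
have b0 : (0 : R) < B%:R by rewrite ltr0n.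
have b3 : (B%:R : R) <= 3%:R by rewrite ler_nat.
have h1 : 1 <= B%:R^-1 * S1 by rewrite mulrC ler_pdivlMr // mul1r.
have h2 : B%:R^-1 * S1 <= B%:R by rewrite mulrC ler_pdivrMr.
have h3 : 1 <= B%:R^-1 * S2 by rewrite mulrC ler_pdivlMr // mul1r.
have h4 : B%:R^-1 * S2 <= B%:R by rewrite mulrC ler_pdivrMr.
rewrite ler_norml; apply/andP; split; lra.
Qed.

Lemma sum_diff_bound (R : realType) B (E1 E2 : 'I_B -> 'I_B -> R) K : (0 < B)%N ->
  (forall i j, `|E1 i j - E2 i j| <= K) ->
  `|B%:R^-1 * \sum_i \sum_j E1 i j - B%:R^-1 * \sum_i \sum_j E2 i j| <= B%:R * K.
Proof.
move=> Bp H.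
have b0 : (0 : R) < B%:R by rewrite ltr0n.
rewrite -mulrBr normrM ger0_norm; last by rewrite invr_ge0 ltW.
rewrite ler_pdivrMl // -sumrB.
apply: le_trans; first exact: ler_norm_sum.
apply: le_trans (_ : \sum_(i < B) B%:R * K <= _); last by rewrite sumr_const card_ord -(mulr_natl (B%:R * K) B).
apply: ler_sum => i _; rewrite -sumrB.
apply: le_trans; first exact: ler_norm_sum.
apply: le_trans (_ : \sum_(j < B) K <= _); last by rewrite sumr_const card_ord -(mulr_natl K B).
by apply: ler_sum => j _.
Qed.

Lemma six_bound (R : realType) (rho q X Y r1 r2 c1 c2 : R) :
  X - rho <= q <= X + rho -> Y - rho <= q <= Y + rho ->
  X - rho <= r1 <= X + rho -> Y - rho <= r2 <= Y + rho ->
  r1 - rho <= c1 <= r1 + rho -> r2 - rho <= c2 <= r2 + rho -> `|c2 - c1| <= 6 * rho.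
Proof.
move=> /andP [? ?] /andP [? ?] /andP [? ?] /andP [? ?] /andP [? ?] /andP [? ?].
rewrite ler_norml; apply/andP; split; lra.
Qed.

Lemma lhr_lem (R : realType) (a r : R) : 0 <= r -> a - r <= a + r.
Proof. move=> ?; lra. Qed.

Lemma traj_S (R : realType) d B m Zt (gradf : Zt -> 'rV[R]_d -> 'rV[R]_d) rs Pi eta vs x0
  (D : nat -> 'I_B -> 'I_m -> Zt) t :
  sgd_traj gradf rs Pi eta vs x0 D t.+1 =
  Pi (sgd_traj gradf rs Pi eta vs x0 D t - eta *: robust_est rs
        (fun i => qgrad gradf (D t.+1 i) (sgd_traj gradf rs Pi eta vs x0 D t)) vs).
Proof. by []. Qed.

Close Scope classical_set_scope.
Unset Implicit Arguments.

Theorem lemma3p9 (R : realType) (d B m T : nat) (Zt : Type)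
  (f : Zt -> 'rV[R]_d -> R) (gradf : Zt -> 'rV[R]_d -> 'rV[R]_d)
  (hessf : Zt -> 'rV[R]_d -> 'M[R]_d) (beta : R)
  (c : 'rV[R]_d) (r : R) (Pi : 'rV[R]_d -> 'rV[R]_d)
  (phi : ('I_B -> R) -> R) (eta tau : R) (x0 : 'rV[R]_d)
  (D1 D2 : nat -> 'I_B -> 'I_m -> Zt) (k : 'I_B) :
  0 <= r ->
  is_euclid_proj_ball c r Pi ->
  (forall z, convex_fun (f z)) ->
  (forall z, is_gradient (f z) (gradf z)) ->
  (forall z, is_hessian (gradf z) (hessf z)) ->
  (forall z x, mxinf (hessf z x) <= beta) ->
  (forall z x, diag_dominant (hessf z x)) ->
  robust_stat (@coord_map R d B phi) ->
  0 < eta -> 0 < tau ->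
  6 * beta * eta * B%:R <= 1 ->
  (forall (t : nat) (i : 'I_B), (t, i) <> (1%N, k) -> D2 t i = D1 t i) ->
  aligned gradf x0 D1 D2 (1 / tau) ->
  forall t : nat, (2 <= t <= T)%N ->
    `| s_stat gradf (@coord_map R d B phi) Pi eta (1 / tau) x0 D1 tau t
       - s_stat gradf (@coord_map R d B phi) Pi eta (1 / tau) x0 D2 tau t | <= 2.
Proof.
move=> r0 hP cvx grad hess hb dd [rs1 rs2 rs3] eta0 tau0 hB hD [X' [Y' [hA1 hA2]]] t /andP [t2 _].
set rs := coord_map phi.
set rho := 1 / tau.
have rho0 : 0 < rho by rewrite /rho divr_gt0.
have trho : tau * rho = 1 by rewrite /rho mul1r mulfV // gt_eqF.
set bp := Num.max beta 0.
have bp0 : 0 <= bp by rewrite /bp le_max lexx orbT.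
have bbp : beta <= bp by rewrite /bp le_max lexx.
have ebp : 6 * bp * eta * B%:R <= 1.
  rewrite /bp; case: (leP 0 beta) => hb0 //.
  by rewrite mulr0 !mul0r ler01.
have hb' : forall z p, mxinf (hessf z p) <= bp by move=> z p; apply: le_trans (hb z p) bbp.
have Hlip : forall z (x y : 'rV[R]_d) j, `|(gradf z x - gradf z y) 0 j| <= bp * linf (x - y).
  by move=> z x y j; apply: grad_lip (hess z) (hb' z).
have Es : forall D, s_stat gradf rs Pi eta rho x0 D tau t =
    B%:R^-1 * \sum_i \sum_j expR (- (tau * linf (qgrad gradf (D t i) (sgd_traj gradf rs Pi eta rho x0 D t.-1)
          - qgrad gradf (D t j) (sgd_traj gradf rs Pi eta rho x0 D t.-1)))).
  by [].
have Et : D2 t = D1 t.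
  apply: funext => i; apply: hD; case=> t1; move: t2; rewrite t1.
  done.
have Hexp : forall (Q : 'I_B -> 'rV[R]_d) i j,
    0 <= expR (- (tau * linf (Q i - Q j))) <= 1.
  move=> Q i j; rewrite expR_ge0 expR_le1 oppr_le0; apply: mulr_ge0; [exact: ltW | exact: linf_ge0].
have Hdiag : forall (Q : 'I_B -> 'rV[R]_d) i, expR (- (tau * linf (Q i - Q i))) = 1.
  move=> Q i; rewrite subrr.
  have -> : linf (0 : 'rV[R]_d) = 0.
    apply/eqP; rewrite eq_le linf_ge0 andbT; apply: linf_le => // j; by rewrite mxE normr0.
  by rewrite mulr0 oppr0 expR0.
case: (leqP B 3) => B3.
  (* small B: s in [1, B] *)
  rewrite !Es.
  have R1 := sum_range (Hexp (fun i => qgrad gradf (D1 t i) (sgd_traj gradf rs Pi eta rho x0 D1 t.-1))) (Hdiag _).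
  have R2 := sum_range (Hexp (fun i => qgrad gradf (D2 t i) (sgd_traj gradf rs Pi eta rho x0 D2 t.-1))) (Hdiag _).
  exact: small_case B3 R1 R2.
have Bp : (0 < B)%N by apply: leq_trans B3.
have BR : (4%:R : R) <= B%:R by rewrite ler_nat.
have ebp1 : eta * bp <= 1.
  have h := mulr_ge0 (ltW eta0) bp0.
  have : eta * bp * 1 <= eta * bp * (6 * B%:R) by apply: ler_wpM2l => //; lra.
  move=> h2; have : eta * bp * (6 * B%:R) = 6 * bp * eta * B%:R by ring.
  lra.
have Hstep : forall z (x y : 'rV[R]_d) j,
    `|(x - y) 0 j - eta * (gradf z x - gradf z y) 0 j| <= linf (x - y).
  move=> z x y j; apply: (@grad_step R d (f z) (gradf z) (hessf z) bp eta x y j (cvx z) (grad z) (hess z) (hb' z) (dd z) (ltW eta0)).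
  exact: ebp1.
set A1 := [set i : 'I_B | `[< in_linf_ball X' rho (qgrad gradf (D1 1%N i) x0) >]].
set A2 := [set i : 'I_B | `[< in_linf_ball Y' rho (qgrad gradf (D2 1%N i) x0) >]].
have [i0 [i0k [iA1 iA2]]] : exists i0, i0 != k /\ i0 \in A1 /\ i0 \in A2.
  have hU := cardsUI A1 A2.
  have hU' : (#|A1 :|: A2| <= B)%N by rewrite -[X in (_ <= X)%N](card_ord B) max_card.
  have hK := cardsD1 k (A1 :&: A2).
  have : (0 < #|(A1 :&: A2) :\ k|)%N.
    move: hA1 hA2 hU hU' hK; rewrite -/A1 -/A2; case: (k \in A1 :&: A2) => /= *; lia.
  case/card_gt0P => i0; rewrite in_setD1 finset.in_setI => /andP [h1 /andP [h2 h3]].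
  by exists i0.
have cardlem : forall a b : nat, (3 < b)%N -> (2 * b <= 3 * a)%N -> (b < 2 * a)%N.
  by move=> a b; clear; lia.
have ED1 : D2 1%N i0 = D1 1%N i0 by apply: hD => -[E]; move: i0k; rewrite E eqxx.
have bq1 : in_linf_ball X' rho (qgrad gradf (D1 1%N i0) x0).
  by move: iA1; rewrite /A1 inE => /asboolP.
have bq2 : in_linf_ball Y' rho (qgrad gradf (D1 1%N i0) x0).
  by move: iA2; rewrite /A2 inE ED1 => /asboolP.
have br1 : in_linf_ball X' rho (rs (fun i => qgrad gradf (D1 1%N i) x0)).
  apply: rs1; change (B < 2 * #|A1|)%N; exact: cardlem B3 hA1.
have br2 : in_linf_ball Y' rho (rs (fun i => qgrad gradf (D2 1%N i) x0)).
  apply: rs1; change (B < 2 * #|A2|)%N; exact: cardlem B3 hA2.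
have H1 : linf (sgd_traj gradf rs Pi eta rho x0 D1 1 - sgd_traj gradf rs Pi eta rho x0 D2 1)
    <= 6 * eta * rho.
  rewrite /=; apply: linf_le; first by apply: mulr_ge0; [apply: mulr_ge0; [|exact: ltW]|exact: ltW].
  move=> j; rewrite !mxE (proj_coord _ _ r0 hP) (proj_coord _ _ r0 hP).
  apply: le_trans; first by apply: clamp_lip; exact: lhr_lem.
  rewrite !re_sub_coord; try exact: ltW.
  set c1 := clamp _ _ (mean _ _ _); set c2 := clamp _ _ (mean (fun i => qgrad gradf (D2 1%N i) x0) _ _).
  have hc1 : rs (fun i => qgrad gradf (D1 1%N i) x0) 0 j - rho <= c1 <= rs (fun i => qgrad gradf (D1 1%N i) x0) 0 j + rho.
    by apply: clamp_itv; apply: lhr_lem; exact: ltW.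
  have hc2 : rs (fun i => qgrad gradf (D2 1%N i) x0) 0 j - rho <= c2 <= rs (fun i => qgrad gradf (D2 1%N i) x0) 0 j + rho.
    by apply: clamp_itv; apply: lhr_lem; exact: ltW.
  have g1 := ball_coord j bq1.
  have g2 := ball_coord j bq2.
  have g3 := ball_coord j br1.
  have g4 := ball_coord j br2.
  apply: (@normeq _ _ (eta * (c2 - c1))); first ring.
  rewrite normrM ger0_norm; last exact: ltW.
  have -> : 6 * eta * rho = eta * (6 * rho) by ring.
  apply: ler_wpM2l; first exact: ltW.
  exact: six_bound g1 g2 g3 g4 hc1 hc2.
have Hn : forall n, linf (sgd_traj gradf rs Pi eta rho x0 D1 n.+1 - sgd_traj gradf rs Pi eta rho x0 D2 n.+1)
    <= 6 * eta * rho.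
  elim=> [|n IH]; first exact: H1.
  have E : D2 n.+2 = D1 n.+2 by apply: funext => i; apply: hD; case.
  rewrite (traj_S _ _ _ _ _ _ D1) (traj_S _ _ _ _ _ _ D2) E.
  apply: le_trans IH.
  apply: (@step_nonexp R d B rs c r Pi eta rho) => //; [exact: ltW | exact: ltW | ].
  by move=> i j; apply: q_step.
have [n tn] : exists n, t = n.+2 by exists t.-2; move: t2; clear; lia.
rewrite !Es Et tn /=.
set x := sgd_traj gradf rs Pi eta rho x0 D1 n.+1.
set y := sgd_traj gradf rs Pi eta rho x0 D2 n.+1.
have Hxy : linf (x - y) <= 6 * eta * rho := Hn n.
have key : forall i j, `|expR (- (tau * linf (qgrad gradf (D1 n.+2 i) x - qgrad gradf (D1 n.+2 j) x)))
    - expR (- (tau * linf (qgrad gradf (D1 n.+2 i) y - qgrad gradf (D1 n.+2 j) y)))|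
    <= tau * (2 * bp * (6 * eta * rho)).
  move=> i j.
  apply: le_trans; first by apply: exp_lip; apply: mulr_ge0; first [exact: ltW | exact: linf_ge0].
  rewrite -mulrBr normrM (ger0_norm (ltW tau0)).
  apply: ler_wpM2l; first exact: ltW.
  apply: le_trans; first exact: linf_diff.
  have e0 := ltW eta0; have r00 := ltW rho0.
  have K0 : 0 <= 2 * bp * (6 * eta * rho).
    apply: mulr_ge0; [apply: mulr_ge0 | apply: mulr_ge0; [apply: mulr_ge0|]] => //.
  apply: linf_le => //.
  move=> l.
  have Q1 := q_lip (D1 n.+2 i) x y l bp0 Hlip.
  have Q2 := q_lip (D1 n.+2 j) x y l bp0 Hlip.
  apply: le_trans (_ : `|(qgrad gradf (D1 n.+2 i) x - qgrad gradf (D1 n.+2 i) y) 0 l|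
       + `|(qgrad gradf (D1 n.+2 j) x - qgrad gradf (D1 n.+2 j) y) 0 l| <= _).
    apply: (@normeq _ _ ((qgrad gradf (D1 n.+2 i) x - qgrad gradf (D1 n.+2 i) y) 0 l
       - (qgrad gradf (D1 n.+2 j) x - qgrad gradf (D1 n.+2 j) y) 0 l)); last exact: ler_normB.
    by rewrite !mxE; ring.
  have : bp * linf (x - y) <= bp * (6 * eta * rho) by apply: ler_wpM2l.
  lra.
apply: le_trans; first exact: (sum_diff_bound Bp key).
have -> : B%:R * (tau * (2 * bp * (6 * eta * rho))) = 2 * (6 * bp * eta * B%:R) * (tau * rho) by ring.
rewrite trho mulr1; lra.
Qed.
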